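(* Let $C_h$ be the set of all $\theta \in [\pi/3,\pi/2]$ such that $\theta = \theta(\Gamma)$ for some $\Gamma \in \mathrm{WR}(\Lambda_h)$. Then $\theta \in C_h$ if and only if $$\cos\theta = \frac{1}{2}\cdot\frac{|n^2+2mn-2m^2|}{n^2-mn+m^2}$$ for some $m,n \in \mathbb{Z}$ with $\gcd(m,n)=1$, $1 \le m/n \le 2$ and $3 \nmid (m+n)$. Moreover, for $\theta \in C_h$ and such integers $m,n$ corresponding to $\theta$, let $$\Gamma_\theta = \frac12\begin{bmatrix} m+n & m-2n \\ (m-n)\sqrt3 & m\sqrt3\end{bmatrix}\mathbb{Z}^2 .$$ Then $\Gamma_\theta \subseteq \Lambda_h$, the similarity class $C_h(\theta)$ equals the set of all $\Omega \in \mathrm{WR}(\Lambda_h)$ similar to $\Gamma_\theta$, and for every $\Gamma \in C_h(\theta)$, $$|\Gamma| \ge |\Gamma_\theta| = n^2-mn+m^2, \qquad |\Lambda_h:\Gamma| \ge |\Lambda_h:\Gamma_\theta| = (2m-n)n .$$ Furthermore, $$C_h(\theta) = \{\sqrt{k}\,A\,\Gamma_\theta \subseteq \Lambda_h : k \in \mathbb{Z}_{>0},\ A \in O_2(\mathbb{R})\}.$$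
   Context: $\Lambda_h = \begin{bmatrix} 1 & -1/2 \\ 0 & \sqrt3/2\end{bmatrix}\mathbb{Z}^2 \subset \mathbb{R}^2$ is the hexagonal lattice. For a lattice $\Gamma = A\mathbb{Z}^2\subset\mathbb{R}^2$ of full rank, $\det(\Gamma)=|\det A|$, and its minimum is $|\Gamma| = \min\{\|y\|^2 : y \in \Gamma\setminus\{0\}\}$ (squared Euclidean norm); vectors attaining it are minimal vectors. For a sublattice $\Gamma\subseteq\Lambda_h$ of full rank, $|\Lambda_h:\Gamma| = \det(\Gamma)/\det(\Lambda_h)$. $\Gamma$ is well-rounded (WR) if it has a basis consisting of minimal vectors (a minimal basis); such a minimal basis can always be chosen with angle between the two vectors in $[\pi/3,\pi/2]$, and this angle is an invariant of $\Gamma$, called the angle $\theta(\Gamma)$. $\mathrm{WR}(\Lambda_h)$ denotes the set of WR sublattices of $\Lambda_h$ (of full rank). Two lattices $\Gamma_1,\Gamma_2$ are similar if $\Gamma_2 = \alpha A\Gamma_1$ for some nonzero real $\alpha$ and $A \in O_2(\mathbb{R})$; two WR lattices are similar iff they have the same angle. For $\theta\in C_h$, $C_h(\theta)$ denotes the set of all $\Omega\in\mathrm{WR}(\Lambda_h)$ with $\theta(\Omega)=\theta$. *)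

(* Defs.v *)
From Stdlib Require Export Reals ZArith Znumtheory.
Open Scope R_scope.

Definition vec := (R * R)%type.

Definition norm2 (p : vec) : R := fst p * fst p + snd p * snd p.
Definition dot (p q : vec) : R := fst p * fst q + snd p * snd q.
Definition det2 (u v : vec) : R := fst u * snd v - snd u * fst v.

Definition lat (u v : vec) : vec -> Prop :=
  fun p => exists a b : Z, p = (IZR a * fst u + IZR b * fst v,
                                IZR a * snd u + IZR b * snd v).

Definition is_lattice (L : vec -> Prop) : Prop :=
  exists u v, det2 u v <> 0 /\ L = lat u v.

Definition hex : vec -> Prop := lat (1, 0) (-(1/2), sqrt 3 / 2).

Definition subset2 (L M : vec -> Prop) : Prop := forall p, L p -> M p.

(* |L| = r : r is the minimum of squared norms of nonzero vectors of L. *)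
Definition lat_min (L : vec -> Prop) (r : R) : Prop :=
  (exists y, L y /\ y <> (0, 0) /\ norm2 y = r) /\
  (forall y, L y -> y <> (0, 0) -> r <= norm2 y).

Definition minimal_vec (L : vec -> Prop) (y : vec) : Prop :=
  L y /\ y <> (0, 0) /\ (forall z, L z -> z <> (0, 0) -> norm2 y <= norm2 z).

Definition WR (L : vec -> Prop) : Prop :=
  exists u v, det2 u v <> 0 /\ L = lat u v /\ minimal_vec L u /\ minimal_vec L v.

Definition lat_angle (L : vec -> Prop) (th : R) : Prop :=
  exists u v, det2 u v <> 0 /\ L = lat u v /\ minimal_vec L u /\ minimal_vec L v /\
    PI / 3 <= th <= PI / 2 /\
    cos th * (sqrt (norm2 u) * sqrt (norm2 v)) = dot u v.

Definition WR_hex (L : vec -> Prop) : Prop := WR L /\ subset2 L hex.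

Definition C_h (th : R) : Prop :=
  PI / 3 <= th <= PI / 2 /\ exists G, WR_hex G /\ lat_angle G th.

Definition C_h_class (th : R) (L : vec -> Prop) : Prop := WR_hex L /\ lat_angle L th.

Definition orth2 (a b c d : R) : Prop :=
  a * a + c * c = 1 /\ b * b + d * d = 1 /\ a * b + c * d = 0.

Definition lin_image (al a b c d : R) (L : vec -> Prop) : vec -> Prop :=
  fun p => exists q, L q /\
    p = (al * (a * fst q + b * snd q), al * (c * fst q + d * snd q)).

Definition similar (L1 L2 : vec -> Prop) : Prop :=
  exists al a b c d, al <> 0 /\ orth2 a b c d /\ L2 = lin_image al a b c d L1.

(* |Lambda_h : L| = i : det(L)/det(Lambda_h), det(Lambda_h) = sqrt3/2. *)
Definition hex_index (L : vec -> Prop) (i : R) : Prop :=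
  exists u v, det2 u v <> 0 /\ L = lat u v /\ i = Rabs (det2 u v) / (sqrt 3 / 2).

Definition Gamma_th (m n : Z) : vec -> Prop :=
  lat ((IZR m + IZR n) / 2, (IZR m - IZR n) * sqrt 3 / 2)
      ((IZR m - 2 * IZR n) / 2, IZR m * sqrt 3 / 2).

Definition good_pair (th : R) (m n : Z) : Prop :=
  Z.gcd m n = 1%Z /\ n <> 0%Z /\ 1 <= IZR m / IZR n <= 2 /\
  ~ (3 | m + n)%Z /\
  cos th = 1 / 2 * (Rabs (IZR n ^ 2 + 2 * IZR m * IZR n - 2 * IZR m ^ 2)
                    / (IZR n ^ 2 - IZR m * IZR n + IZR m ^ 2)).

(* Main.v *)
Require Import Defs.
From Stdlib Require Import Reals ZArith Znumtheory.
From Stdlib Require Import Lia Lra Psatz FunctionalExtensionality PropExtensionality.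
Open Scope R_scope.

(* ===================== Eisenstein integers as Z*Z ===================== *)
Definition ez := (Z*Z)%type.
Definition zadd (x y : ez) : ez := (fst x + fst y, snd x + snd y)%Z.
Definition zopp (x : ez) : ez := (- fst x, - snd x)%Z.
Definition zsub (x y : ez) : ez := zadd x (zopp y).
Definition zmul (x y : ez) : ez :=
  (fst x * fst y - snd x * snd y, fst x * snd y + snd x * fst y - snd x * snd y)%Z.
Definition z0 : ez := (0,0)%Z.
Definition z1 : ez := (1,0)%Z.
Lemma ez_ring : ring_theory z0 z1 zadd zmul zsub zopp (@eq ez).
Proof.
  constructor; intros; repeat match goal with x : ez |- _ => destruct x end;
  unfold zsub, zadd, zmul, zopp, z0, z1; cbn [fst snd]; apply f_equal2; ring.
Qed.
Add Ring EzRing : ez_ring.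

Definition zc (k : Z) : ez := (k, 0%Z).
Definition zconj (x : ez) : ez := (fst x - snd x, - snd x)%Z.
Definition nrm (x : ez) : Z := (fst x * fst x - fst x * snd x + snd x * snd x)%Z.
Definition dz (x y : ez) : Z :=
  (2 * fst x * fst y - fst x * snd y - snd x * fst y + 2 * snd x * snd y)%Z.
Definition detz (x y : ez) : Z := (fst x * snd y - snd x * fst y)%Z.
Definition hz (m n : Z) : Z := (2*m*m - 2*m*n - n*n)%Z.

Ltac ezd := repeat match goal with x : ez |- _ => destruct x end;
  unfold zsub, zadd, zmul, zopp, z0, z1, zc, zconj, nrm, dz, detz in *; cbn [fst snd] in *.

Section IntPart.
Local Open Scope Z_scope.

Lemma nrm_mul x y : nrm (zmul x y) = nrm x * nrm y.
Proof. ezd; ring. Qed.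
Lemma nrm_conj x : nrm (zconj x) = nrm x.
Proof. ezd; ring. Qed.
Lemma mul_conj x : zmul x (zconj x) = zc (nrm x).
Proof. ezd; apply f_equal2; ring. Qed.
Lemma nrm_nonneg x : 0 <= nrm x.
Proof. ezd. nia. Qed.
Lemma nrm_zero x : nrm x = 0 -> x = z0.
Proof. ezd. intro H. assert (z = 0 /\ z2 = 0) as [-> ->] by nia. reflexivity. Qed.
Lemma nrm_pos x : x <> z0 -> 0 < nrm x.
Proof. intro H. pose proof (nrm_nonneg x). destruct (Z.eq_dec (nrm x) 0).
  - apply nrm_zero in e. contradiction. - lia. Qed.
Lemma zmul_cancel x y : zmul x y = z0 -> x <> z0 -> y = z0.
Proof. intros H Hx. apply nrm_zero. pose proof (nrm_mul x y) as E.
  rewrite H in E. pose proof (nrm_pos x Hx). unfold nrm at 1 in E; cbn in E. nia. Qed.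
Lemma lagrange x y : 4 * nrm x * nrm y = dz x y * dz x y + 3 * detz x y * detz x y.
Proof. ezd; ring. Qed.

Definition Iel (u v x : ez) := exists a b, x = zadd (zmul a u) (zmul b v).
Lemma I_add u v x y : Iel u v x -> Iel u v y -> Iel u v (zadd x y).
Proof. intros [a [b ->]] [c [d ->]]. exists (zadd a c), (zadd b d). ring. Qed.
Lemma I_mul u v c x : Iel u v x -> Iel u v (zmul c x).
Proof. intros [a [b ->]]. exists (zmul c a), (zmul c b). ring. Qed.
Lemma I_eq u v x y : Iel u v x -> x = y -> Iel u v y.
Proof. intros H <-; exact H. Qed.
Lemma I_u u v : Iel u v u. Proof. exists z1, z0. ring. Qed.
Lemma I_v u v : Iel u v v. Proof. exists z0, z1. ring. Qed.

Lemma bez3 k : ~ (3 | k) -> exists s t, s * k + t * 3 = 1.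
Proof. intro H. pose proof (prime_rel_prime 3 prime_3 k H) as R.
  destruct (rel_prime_bezout _ _ R) as [a b Hab]. exists b, a. lia. Qed.

Lemma int_bez m n : Z.gcd m n = 1 -> ~ (3 | m + n) ->
  exists a1 a2, zadd (zmul a1 (m, m - n)) (zmul a2 (m - n, m)) = z1.
Proof.
  intros Hg H3.
  destruct (Z.gcd_bezout m n 1 Hg) as [x [y Hxy]].
  set (u0 := (m, m-n)). set (v0 := (m-n, m)).
  assert (I1 : Iel u0 v0 (zc (m*m - m*n + n*n))).
  { apply (I_eq _ _ (zmul (zconj u0) u0)). apply I_mul, I_u.
    unfold u0; ezd; apply f_equal2; ring. }
  assert (I2 : Iel u0 v0 (zmul (zc n) (-1, 1))).
  { apply (I_eq _ _ (zadd v0 (zmul (zc (-1)) u0))). apply I_add. apply I_v. apply I_mul, I_u.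
    unfold u0, v0; ezd; apply f_equal2; ring. }
  set (X := x*x). set (Y := 2*y - y*y*n - x*x*n + x*x*m).
  assert (HXY : X * (m*m - m*n + n*n) + Y * n = 1).
  { unfold X, Y. assert (E: (x*m)*(x*m) = (1 - y*n)*(1-y*n)) by (f_equal; lia). nia. }
  assert (I3 : Iel u0 v0 (-1, 1)).
  { apply (I_eq _ _ (zadd (zmul (zmul (zc X) (-1,1)) (zc (m*m - m*n + n*n)))
                          (zmul (zc Y) (zmul (zc n) (-1, 1))))).
    apply I_add; apply I_mul; assumption.
    unfold zc; ezd; apply f_equal2; nia. }
  assert (I4 : Iel u0 v0 (zc 3)).
  { apply (I_eq _ _ (zmul (-2,-1) (-1,1))). apply I_mul; assumption. reflexivity. }
  assert (I5 : Iel u0 v0 (zc (2*m - n))).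
  { apply (I_eq _ _ (zadd u0 (zmul (zc (n - m)) (-1, 1)))). apply I_add. apply I_u.
    apply I_mul; assumption. unfold u0, zc; ezd; apply f_equal2; ring. }
  assert (H3' : ~ (3 | 2*m - n)).
  { intros [k Hk]. apply H3. exists (m - k). lia. }
  destruct (bez3 _ H3') as [s [t Hst]].
  assert (I6 : Iel u0 v0 z1).
  { apply (I_eq _ _ (zadd (zmul (zc s) (zc (2*m-n))) (zmul (zc t) (zc 3)))).
    apply I_add; apply I_mul; assumption. unfold zc, z1; ezd; apply f_equal2; lia. }
  destruct I6 as [a [b Hab]]. exists a, b. now rewrite Hab.
Qed.


Lemma vconj_fst u v : 2 * fst (zmul v (zconj u)) = dz u v + detz u v.
Proof. ezd; ring. Qed.
Lemma vconj_snd u v : snd (zmul v (zconj u)) = detz u v.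
Proof. ezd; ring. Qed.

Lemma int_key zu zv u0 v0 NL Q a1 a2 :
  nrm zu = NL -> nrm zv = NL -> nrm u0 = Q -> nrm v0 = Q -> 0 < NL -> 0 < Q ->
  dz zu zv * Q = dz u0 v0 * NL -> detz zu zv * Q = detz u0 v0 * NL ->
  zadd (zmul a1 u0) (zmul a2 v0) = z1 ->
  exists b, zu = zmul b u0 /\ zv = zmul b v0.
Proof.
  intros Hu Hv Hu0 Hv0 HN HQ Hd Ht Hb.
  assert (Hz : zmul (zmul zv (zconj zu)) (zc Q) = zmul (zmul v0 (zconj u0)) (zc NL)).
  { pose proof (vconj_fst zu zv) as F1. pose proof (vconj_snd zu zv) as S1.
    pose proof (vconj_fst u0 v0) as F2. pose proof (vconj_snd u0 v0) as S2.
    destruct (zmul zv (zconj zu)) as [x y]; destruct (zmul v0 (zconj u0)) as [x0 y0].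
    cbn [fst snd] in *. unfold zmul, zc; cbn [fst snd].
    apply f_equal2; [|subst; nia].
    assert (2 * (x * Q) = 2 * (x0 * NL)) by (rewrite Z.mul_assoc, F1, Z.mul_assoc, F2; nia). lia. }
  assert (H1 : zmul zv u0 = zmul v0 zu).
  { set (P := zsub (zmul zv u0) (zmul v0 zu)).
    assert (HP : zmul (zmul (zconj zu) (zconj u0)) P = z0).
    { transitivity (zsub (zmul (zmul zv (zconj zu)) (zmul u0 (zconj u0)))
                         (zmul (zmul v0 (zconj u0)) (zmul zu (zconj zu)))).
      unfold P; ring. rewrite !mul_conj, Hu, Hu0, Hz. ring. }
    apply zmul_cancel in HP.
    - transitivity (zadd (zmul v0 zu) P). unfold P; ring. rewrite HP; ring.
    - intro E. pose proof (nrm_mul (zconj zu) (zconj u0)) as N. rewrite E, !nrm_conj, Hu, Hu0 in N.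
      cbn in N. nia. }
  set (b := zadd (zmul a1 zu) (zmul a2 zv)).
  assert (Hbu : zu = zmul b u0).
  { unfold b. transitivity (zmul zu (zadd (zmul a1 u0) (zmul a2 v0))).
    rewrite Hb; ring.
    transitivity (zadd (zmul a1 (zmul zu u0)) (zmul a2 (zmul v0 zu))). ring.
    rewrite <- H1. ring. }
  exists b. split; [exact Hbu|].
  assert (HP : zmul u0 (zsub zv (zmul b v0)) = z0).
  { transitivity (zsub (zmul zv u0) (zmul v0 (zmul b u0))). ring.
    rewrite <- Hbu, H1. ring. }
  apply zmul_cancel in HP.
  - transitivity (zadd (zmul b v0) (zsub zv (zmul b v0))). ring. rewrite HP; ring.
  - intro E. rewrite E in Hu0. unfold nrm, z0 in Hu0; cbn in Hu0. lia.
Qed.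

Lemma int_min x y Q i j : nrm x = Q -> nrm y = Q -> 0 < Q -> -Q <= dz x y <= Q ->
  (i <> 0 \/ j <> 0) -> Q <= nrm (zadd (zmul (zc i) x) (zmul (zc j) y)).
Proof.
  intros Hx Hy HQ Hd Hij.
  assert (E : nrm (zadd (zmul (zc i) x) (zmul (zc j) y)) = i*i*nrm x + j*j*nrm y + i*j*dz x y)
    by (ezd; ring).
  rewrite E, Hx, Hy.
  assert (1 <= i*i + j*j - i*j /\ 1 <= i*i + j*j + i*j) as [A B] by nia.
  destruct (Z.le_ge_cases 0 (i*j)).
  - assert (i*j*dz x y >= - (i*j) * Q) by nia. nia.
  - assert (i*j*dz x y >= (i*j) * Q) by nia. nia.
Qed.

Definition Bez (p q : Z) := exists s t, s * p + t * q = 1.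

Lemma int_norm1 p q : Bez p q -> 0 < q -> q <= p <= 2*q ->
  exists m n, Bez m n /\ 0 < n /\ n <= m <= 2*n /\ ~ (3 | m + n) /\
    nrm (p,q) * Z.abs (hz m n) = nrm (m,n) * Z.abs (hz p q).
Proof.
  intros [s [t Hst]] Hq Hpq.
  destruct (Zdivide_dec 3 (p+q)) as [[j Hj]|Hn].
  - set (m := j). set (n := 2*j - q).
    assert (Ep : p = m + n) by (unfold m, n; lia).
    assert (Eq : q = 2*m - n) by (unfold m, n; lia).
    exists m, n. split; [|split; [|split; [|split]]].
    + exists (s + 2*t), (s - t). rewrite Ep, Eq in Hst. lia.
    + lia.
    + lia.
    + intros [k Hk]. rewrite <- Ep in Hk. assert (q = 3 * j - p) by lia.
      assert (s * p + t * q = 3 * (s * k + t * (j - k))) by nia. lia.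
    + rewrite Ep, Eq. unfold nrm, hz; cbn [fst snd].
      replace (2 * (m + n) * (m + n) - 2 * (m + n) * (2 * m - n) - (2 * m - n) * (2 * m - n))
        with (-3 * (2*m*m - 2*m*n - n*n)) by ring.
      rewrite Z.abs_mul. cbn [Z.abs]. ring.
  - exists p, q. split; [exists s, t; exact Hst|]. repeat split; try lia. exact Hn.
Qed.

Lemma int_norm p q : Bez p q -> q <> 0 -> Z.abs (hz p q) <= nrm (p,q) ->
  exists m n, Bez m n /\ 0 < n /\ n <= m <= 2*n /\ ~ (3 | m + n) /\
    nrm (p,q) * Z.abs (hz m n) = nrm (m,n) * Z.abs (hz p q).
Proof.
  assert (Hpos : forall p q, Bez p q -> 0 < q -> Z.abs (hz p q) <= nrm (p,q) ->
    exists m n, Bez m n /\ 0 < n /\ n <= m <= 2*n /\ ~ (3 | m + n) /\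
    nrm (p,q) * Z.abs (hz m n) = nrm (m,n) * Z.abs (hz p q)).
  { clear p q. intros p q Hb Hq Hh.
    assert (A : (p - 2*q) * (p + q) <= 0).
    { unfold hz, nrm in Hh; cbn [fst snd] in Hh. apply Z.abs_le in Hh. nia. }
    assert (B : 0 <= p * (p - q)).
    { unfold hz, nrm in Hh; cbn [fst snd] in Hh. apply Z.abs_le in Hh. nia. }
    destruct (Z.le_gt_cases p 0).
    - assert (- q <= p) by nia.
      destruct (int_norm1 (q - p) q) as [m [n [H1 [H2 [H3 [H4 H5]]]]]].
      + destruct Hb as [s [t Hst]]. exists (-s), (s + t). lia.
      + exact Hq.
      + lia.
      + exists m, n. repeat split; try tauto; try lia.
        replace (nrm (p,q)) with (nrm (q-p,q)) by (unfold nrm; cbn; ring).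
        replace (hz p q) with (hz (q-p) q) by (unfold hz; ring). exact H5.
    - assert (q <= p <= 2*q) by nia. apply int_norm1; auto. }
  intros Hb Hq Hh. destruct (Z.lt_trichotomy q 0) as [Hl|[He|Hg]].
  - destruct (Hpos (-p) (-q)) as [m [n [H1 [H2 [H3 [H4 H5]]]]]].
    + destruct Hb as [s [t Hst]]. exists (-s), (-t). lia.
    + lia.
    + replace (nrm (-p,-q)) with (nrm (p,q)) by (unfold nrm; cbn; ring).
      replace (hz (-p) (-q)) with (hz p q) by (unfold hz; ring). exact Hh.
    + exists m, n. repeat split; try tauto; try lia.
      replace (nrm (p,q)) with (nrm (-p,-q)) by (unfold nrm; cbn; ring).
      replace (hz p q) with (hz (-p) (-q)) by (unfold hz; ring). exact H5.
  - lia.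
  - apply Hpos; auto.
Qed.

Lemma int_fwd zu zv N : nrm zu = N -> nrm zv = N -> 0 < N -> detz zu zv <> 0 ->
  0 <= dz zu zv <= N ->
  exists m n, Bez m n /\ 0 < n /\ n <= m <= 2*n /\ ~ (3 | m + n) /\
    dz zu zv * nrm (m,n) = N * Z.abs (hz m n).
Proof.
  intros Hu Hv HN Ht Hd.
  pose proof (vconj_fst zu zv) as F. pose proof (vconj_snd zu zv) as S.
  pose proof (nrm_mul zv (zconj zu)) as NZ. rewrite nrm_conj, Hu, Hv in NZ.
  destruct (zmul zv (zconj zu)) as [X Y]. cbn [fst snd] in F, S.
  unfold nrm at 1 in NZ; cbn [fst snd] in NZ.
  set (D := dz zu zv) in *.
  assert (Key : D * nrm (N + X, Y) = N * hz (N + X) Y).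
  { unfold nrm, hz; cbn [fst snd].
    assert (ED : D = 2*X - Y) by lia. rewrite ED.
    assert (E : (2*X - Y) * ((N + X) * (N + X) - (N + X) * Y + Y * Y) - N *
      (2 * (N + X) * (N + X) - 2 * (N + X) * Y - Y * Y) =
      (2*X - Y + 2*N) * (X * X - X * Y + Y * Y - N * N)) by ring.
    rewrite NZ in E. lia. }
  assert (HY : Y <> 0) by lia.
  set (g := Z.gcd (N + X) Y).
  assert (Hg : 0 < g).
  { pose proof (Z.gcd_nonneg (N + X) Y). destruct (Z.eq_dec g 0) as [e|]; [|lia].
    apply Z.gcd_eq_0 in e. lia. }
  destruct (Z.gcd_divide_l (N + X) Y) as [p Hp].
  destruct (Z.gcd_divide_r (N + X) Y) as [q Hq].
  fold g in Hp, Hq.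
  destruct (Z.gcd_bezout (N + X) Y g eq_refl) as [a [b Hab]].
  assert (Hb : Bez p q).
  { exists a, b. rewrite Hp, Hq in Hab. apply (Z.mul_reg_r _ _ g); [lia|]. lia. }
  assert (Hq0 : q <> 0) by (intro; subst; lia).
  assert (K2 : D * nrm (p,q) = N * hz p q).
  { rewrite Hp, Hq in Key. unfold nrm, hz in *; cbn [fst snd] in *.
    apply (Z.mul_reg_r _ _ (g*g)); [nia|]. lia. }
  assert (Hn : 0 < nrm (p,q)).
  { apply nrm_pos. intro E; inversion E; lia. }
  assert (Hh : 0 <= hz p q <= nrm (p,q)) by nia.
  destruct (int_norm p q Hb Hq0) as [m [n [H1 [H2 [H3 [H4 H5]]]]]].
  { rewrite Z.abs_eq; lia. }
  exists m, n. repeat split; try tauto; try lia.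
  rewrite (Z.abs_eq (hz p q)) in H5 by lia.
  apply (Z.mul_reg_l _ _ (nrm (p,q))); [lia|].
  rewrite Z.mul_assoc, (Z.mul_comm _ D), K2. nia.
Qed.

End IntPart.

Lemma s3 : sqrt 3 * sqrt 3 = 3. Proof. apply sqrt_sqrt; lra. Qed.
Lemma s3pos : 0 < sqrt 3. Proof. apply sqrt_lt_R0; lra. Qed.

Definition E (z : ez) : vec := (IZR (fst z) - IZR (snd z) / 2, IZR (snd z) * sqrt 3 / 2).

Ltac pushI := repeat first [rewrite plus_IZR | rewrite minus_IZR | rewrite mult_IZR | rewrite opp_IZR].
Ltac sfield := generalize s3; generalize (sqrt 3); intros ?s ?Hs; field [Hs].
Ltac sring := generalize s3; generalize (sqrt 3); intros ?s ?Hs; ring [Hs].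

Lemma norm2_E z : norm2 (E z) = IZR (nrm z).
Proof. destruct z; unfold norm2, E, nrm; cbn [fst snd]; pushI; sfield. Qed.
Lemma dot_E z w : dot (E z) (E w) = IZR (dz z w) / 2.
Proof. destruct z, w; unfold dot, E, dz; cbn [fst snd]; pushI; sfield. Qed.
Lemma det_E z w : det2 (E z) (E w) = IZR (detz z w) * sqrt 3 / 2.
Proof. destruct z, w; unfold det2, E, detz; cbn [fst snd]; pushI; sfield. Qed.
Lemma E_inj z w : E z = E w -> z = w.
Proof.
  destruct z as [a b], w as [c d]; unfold E; cbn [fst snd]; intro H.
  injection H as H1 H2. pose proof s3pos.
  assert (IZR b = IZR d) by nra. apply eq_IZR in H0. subst.
  assert (IZR a = IZR c) by lra. apply eq_IZR in H0. subst. reflexivity.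
Qed.
Lemma E_z0 : E z0 = (0,0).
Proof. unfold E, z0; cbn [fst snd]. f_equal; field. Qed.
Lemma E_nz z : z <> z0 -> E z <> (0,0).
Proof. intros H C. rewrite <- E_z0 in C. apply E_inj in C. contradiction. Qed.
Lemma E_nz' z : E z <> (0,0) -> z <> z0.
Proof. intros H C. subst. apply H, E_z0. Qed.

Lemma lat_E x y p : lat (E x) (E y) p <->
  exists i j, p = E (zadd (zmul (zc i) x) (zmul (zc j) y)).
Proof.
  split; intros [i [j ->]]; exists i, j; destruct x, y; unfold E, zadd, zmul, zc;
  cbn [fst snd]; pushI; f_equal; sfield.
Qed.

Lemma hex_E p : hex p <-> exists z, p = E z.
Proof.
  unfold hex; split.
  - intros [a [b ->]]. exists (a, b). unfold E; cbn [fst snd]. f_equal; field.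
  - intros [[a b] ->]. exists a, b. unfold E; cbn [fst snd]. f_equal; field.
Qed.

Lemma E_conj z : E (zconj z) = (fst (E z), - snd (E z)).
Proof. destruct z; unfold E, zconj; cbn [fst snd]; pushI; f_equal; field. Qed.
Lemma E_opp z : E (zopp z) = (- fst (E z), - snd (E z)).
Proof. destruct z; unfold E, zopp; cbn [fst snd]; pushI; f_equal; field. Qed.
Lemma E_mul b z : E (zmul b z) =
  (fst (E b) * fst (E z) - snd (E b) * snd (E z), snd (E b) * fst (E z) + fst (E b) * snd (E z)).
Proof. destruct b, z; unfold E, zmul; cbn [fst snd]; pushI; f_equal; sfield. Qed.

Definition vneg (v : vec) : vec := (- fst v, - snd v).
Definition Mlin (al a b c d : R) (p : vec) : vec :=
  (al * (a * fst p + b * snd p), al * (c * fst p + d * snd p)).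

Lemma set_ext (A B : vec -> Prop) : (forall p, A p <-> B p) -> A = B.
Proof. intro H. apply functional_extensionality; intro p. apply propositional_extensionality, H. Qed.

Lemma lat_neg u v : lat u (vneg v) = lat u v.
Proof.
  apply set_ext; intro p; split; intros [i [j ->]].
  - exists i, (-j)%Z. unfold vneg; cbn [fst snd]. rewrite opp_IZR. f_equal; ring.
  - exists i, (-j)%Z. unfold vneg; cbn [fst snd]. rewrite opp_IZR. f_equal; ring.
Qed.
Lemma lat_u u v : lat u v u.
Proof. exists 1%Z, 0%Z. destruct u; cbn. f_equal; ring. Qed.
Lemma lat_v u v : lat u v v.
Proof. exists 0%Z, 1%Z. destruct v; cbn. f_equal; ring. Qed.

Lemma lin_image_lat al a b c d p q :
  lin_image al a b c d (lat p q) = lat (Mlin al a b c d p) (Mlin al a b c d q).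
Proof.
  apply set_ext; intro x; split.
  - intros [y [[i [j ->]] ->]]. exists i, j. unfold Mlin; cbn [fst snd]. f_equal; ring.
  - intros [i [j ->]]. eexists. split. exists i, j. reflexivity.
    unfold Mlin; cbn [fst snd]. f_equal; ring.
Qed.

Lemma orth_det a b c d : orth2 a b c d -> (a*d - b*c) * (a*d - b*c) = 1.
Proof.
  intros [h1 [h2 h3]].
  transitivity ((a*a + c*c) * (b*b + d*d) - (a*b + c*d) * (a*b+c*d)); [ring|].
  rewrite h1, h2, h3. ring.
Qed.
Lemma norm2_M al a b c d x : orth2 a b c d -> norm2 (Mlin al a b c d x) = al*al * norm2 x.
Proof.
  intros [h1 [h2 h3]]. destruct x as [x1 x2]. unfold norm2, Mlin; cbn [fst snd].
  transitivity (al*al*(x1*x1*(a*a+c*c) + x2*x2*(b*b+d*d) + 2*x1*x2*(a*b+c*d))); [ring|].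
  rewrite h1, h2, h3. ring.
Qed.
Lemma dot_M al a b c d x y : orth2 a b c d -> dot (Mlin al a b c d x) (Mlin al a b c d y) = al*al * dot x y.
Proof.
  intros [h1 [h2 h3]]. destruct x as [x1 x2], y as [y1 y2]. unfold dot, Mlin; cbn [fst snd].
  transitivity (al*al*(x1*y1*(a*a+c*c) + x2*y2*(b*b+d*d) + (x1*y2 + x2*y1)*(a*b+c*d))); [ring|].
  rewrite h1, h2, h3. ring.
Qed.
Lemma det_M al a b c d x y : det2 (Mlin al a b c d x) (Mlin al a b c d y) = al*al*(a*d - b*c) * det2 x y.
Proof. destruct x, y; unfold det2, Mlin; cbn [fst snd]; ring. Qed.
Lemma M0 al a b c d : Mlin al a b c d (0,0) = (0,0).
Proof. unfold Mlin; cbn [fst snd]; f_equal; ring. Qed.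

Lemma norm2_nz x : x <> (0,0) -> 0 < norm2 x.
Proof.
  destruct x as [x1 x2]; unfold norm2; cbn [fst snd]; intro H.
  destruct (Req_dec x1 0); destruct (Req_dec x2 0); subst; try (exfalso; apply H; reflexivity); nra.
Qed.

Lemma det_lat p q x y : lat p q x -> lat p q y -> exists k : Z, det2 x y = IZR k * det2 p q.
Proof.
  intros [i1 [j1 ->]] [i2 [j2 ->]]. exists (i1*j2 - j1*i2)%Z.
  unfold det2; cbn [fst snd]. pushI. ring.
Qed.

Lemma sim_transfer G L th al a b c d : lat_angle G th -> al <> 0 -> orth2 a b c d ->
  L = lin_image al a b c d G -> lat_angle L th.
Proof.
  intros [u [v [Hdet [HG [[_ [Hu0 Hmu]] [[_ [Hv0 Hmv]] [Hth Hcos]]]]]]] Hal Ho HL.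
  subst G.
  assert (HL' : L = lat (Mlin al a b c d u) (Mlin al a b c d v)) by (rewrite HL; apply lin_image_lat).
  pose proof (orth_det a b c d Ho) as Hd.
  assert (Hal2 : 0 < al * al) by nra.
  assert (Hmin : forall w, lat u v w -> w <> (0,0) -> forall z, L z -> z <> (0,0) ->
            (forall y, lat u v y -> y <> (0,0) -> norm2 w <= norm2 y) ->
            norm2 (Mlin al a b c d w) <= norm2 z).
  { intros w Hw Hw0 z Hz Hz0 Hm. rewrite HL in Hz. destruct Hz as [q [Hq ->]].
    change (Mlin al a b c d q <> (0,0)) in Hz0.
    change (norm2 (Mlin al a b c d w) <= norm2 (Mlin al a b c d q)).
    assert (q <> (0,0)) by (intro E; subst; apply Hz0, M0).
    rewrite !norm2_M by exact Ho. apply Rmult_le_compat_l; [lra|]. apply Hm; auto. }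
  assert (HMnz : forall w, w <> (0,0) -> Mlin al a b c d w <> (0,0)).
  { intros w Hw E. pose proof (norm2_nz w Hw). pose proof (norm2_M al a b c d w Ho).
    rewrite E in H0. unfold norm2 in H0 at 1; cbn in H0. nra. }
  exists (Mlin al a b c d u), (Mlin al a b c d v). split; [|split; [exact HL'|split; [|split; [|split]]]].
  - rewrite det_M. intro E. apply Rmult_integral in E as [E|E]; [|contradiction].
    apply Rmult_integral in E as [E|E]; [lra|]. rewrite E in Hd. lra.
  - split; [rewrite HL'; apply lat_u|]. split; [apply HMnz; exact Hu0|].
    intros z Hz Hz0. apply (Hmin u (lat_u u v) Hu0 z Hz Hz0 Hmu).
  - split; [rewrite HL'; apply lat_v|]. split; [apply HMnz; exact Hv0|].
    intros z Hz Hz0. apply (Hmin v (lat_v u v) Hv0 z Hz Hz0 Hmv).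
  - exact Hth.
  - rewrite !norm2_M, dot_M by exact Ho.
    assert (0 <= norm2 u) by (pose proof (norm2_nz u Hu0); lra).
    assert (0 <= norm2 v) by (pose proof (norm2_nz v Hv0); lra).
    rewrite (sqrt_mult_alt (al*al) (norm2 u)), (sqrt_mult_alt (al*al) (norm2 v)) by lra.
    assert (Hs : sqrt (al * al) * sqrt (al * al) = al * al) by (apply sqrt_sqrt; lra).
    rewrite <- Hcos.
    transitivity (sqrt (al * al) * sqrt (al * al) * (cos th * (sqrt (norm2 u) * sqrt (norm2 v)))); [ring|].
    rewrite Hs. reflexivity.
Qed.

Lemma detz_comb_l x y i j : detz (zadd (zmul (zc i) x) (zmul (zc j) y)) y = (i * detz x y)%Z.
Proof. ezd; ring. Qed.
Lemma detz_comb_r x y i j : detz x (zadd (zmul (zc i) x) (zmul (zc j) y)) = (j * detz x y)%Z.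
Proof. ezd; ring. Qed.
Lemma comb_nz x y i j : detz x y <> 0%Z -> (i <> 0 \/ j <> 0)%Z ->
  zadd (zmul (zc i) x) (zmul (zc j) y) <> z0.
Proof.
  intros Hd Hij E. pose proof (detz_comb_l x y i j) as A. pose proof (detz_comb_r x y i j) as B.
  rewrite E in A, B. assert (C1 : detz z0 y = 0%Z) by (ezd; ring).
  assert (C2 : detz x z0 = 0%Z) by (ezd; ring). rewrite C1 in A. rewrite C2 in B.
  destruct Hij as [Hi|Hj]; apply Hd; [apply (Z.mul_reg_l _ _ i)|apply (Z.mul_reg_l _ _ j)]; lia.
Qed.

Lemma extract L th : subset2 L hex -> lat_angle L th ->
  exists zu zv, L = lat (E zu) (E zv) /\ detz zu zv <> 0%Z /\ nrm zu = nrm zv /\ (0 < nrm zu)%Z /\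
  (forall i j, (i <> 0 \/ j <> 0)%Z -> (nrm zu <= nrm (zadd (zmul (zc i) zu) (zmul (zc j) zv)))%Z) /\
  PI/3 <= th <= PI/2 /\ cos th * IZR (nrm zu) = IZR (dz zu zv) / 2.
Proof.
  intros Hsub [u [v [Hdet [HL [[Lu [Hu0 Hmu]] [[Lv [Hv0 Hmv]] [Hth Hcos]]]]]]].
  destruct (proj1 (hex_E u) (Hsub u Lu)) as [zu ->].
  destruct (proj1 (hex_E v) (Hsub v Lv)) as [zv ->].
  pose proof (Hmu _ Lv Hv0) as A. pose proof (Hmv _ Lu Hu0) as B.
  rewrite !norm2_E in A, B. apply le_IZR in A. apply le_IZR in B.
  assert (Hd : detz zu zv <> 0%Z).
  { intro E. rewrite det_E, E in Hdet. apply Hdet. lra. }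
  exists zu, zv. split; [exact HL|]. split; [exact Hd|]. split; [lia|]. split.
  { apply nrm_pos. apply E_nz'. exact Hu0. }
  split; [|split; [exact Hth|]].
  - intros i j Hij. apply le_IZR. rewrite <- !norm2_E. apply Hmu.
    + rewrite HL. apply lat_E. exists i, j. reflexivity.
    + apply E_nz, comb_nz; assumption.
  - rewrite <- dot_E, <- Hcos. rewrite !norm2_E. replace (nrm zv) with (nrm zu) by lia.
    rewrite sqrt_sqrt; [reflexivity|]. apply IZR_le. apply nrm_nonneg.
Qed.

Lemma ratio_iff m n : IZR n <> 0 ->
  (1 <= IZR m / IZR n <= 2 <-> IZR n * IZR n <= IZR m * IZR n <= 2 * (IZR n * IZR n)).
Proof.
  intro Hn. set (t := IZR m / IZR n). assert (Hm : IZR m = t * IZR n) by (unfold t; field; exact Hn).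
  rewrite Hm. assert (0 < IZR n * IZR n) by (destruct (Rlt_or_le 0 (IZR n)); nra).
  split; intros [h1 h2]; split; nra.
Qed.

Lemma cos_iff th m n : (n <> 0)%Z ->
  (cos th = 1 / 2 * (Rabs (IZR n ^ 2 + 2 * IZR m * IZR n - 2 * IZR m ^ 2)
                    / (IZR n ^ 2 - IZR m * IZR n + IZR m ^ 2)) <->
   cos th * IZR (nrm (m,n)) = IZR (Z.abs (hz m n)) / 2).
Proof.
  intro Hn.
  replace (IZR n ^ 2 + 2 * IZR m * IZR n - 2 * IZR m ^ 2) with (IZR (- hz m n))
    by (unfold hz; pushI; ring).
  replace (IZR n ^ 2 - IZR m * IZR n + IZR m ^ 2) with (IZR (nrm (m,n)))
    by (unfold nrm; cbn [fst snd]; pushI; ring).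
  rewrite <- abs_IZR, Z.abs_opp.
  assert (Hp : (0 < nrm (m,n))%Z) by (apply nrm_pos; intro E; inversion E; lia).
  apply IZR_lt in Hp.
  split; intro H.
  - rewrite H. field. lra.
  - apply (Rmult_eq_reg_r (IZR (nrm (m,n)))); [|lra]. rewrite H. field. lra.
Qed.

Lemma Gamma_eq m n : Gamma_th m n = lat (E (m, (m - n)%Z)) (E ((m - n)%Z, m)).
Proof. unfold Gamma_th, E; cbn [fst snd]. f_equal; f_equal; pushI; field. Qed.

Lemma nrm_u0 m n : nrm (m, (m-n)%Z) = nrm (m,n). Proof. unfold nrm; cbn [fst snd]; ring. Qed.
Lemma nrm_v0 m n : nrm ((m-n)%Z, m) = nrm (m,n). Proof. unfold nrm; cbn [fst snd]; ring. Qed.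
Lemma dz_uv0 m n : dz (m, (m-n)%Z) ((m-n)%Z, m) = hz m n. Proof. unfold dz, hz; cbn [fst snd]; ring. Qed.
Lemma detz_uv0 m n : detz (m, (m-n)%Z) ((m-n)%Z, m) = (n * (2*m - n))%Z. Proof. unfold detz; cbn [fst snd]; ring. Qed.
Lemma nrm_opp x : nrm (zopp x) = nrm x. Proof. ezd; ring. Qed.
Lemma dz_opp x y : dz x (zopp y) = (- dz x y)%Z. Proof. ezd; ring. Qed.
Lemma detz_opp x y : detz x (zopp y) = (- detz x y)%Z. Proof. ezd; ring. Qed.
Lemma dz_conj x y : dz (zconj x) (zconj y) = dz x y. Proof. ezd; ring. Qed.
Lemma detz_conj x y : detz (zconj x) (zconj y) = (- detz x y)%Z. Proof. ezd; ring. Qed.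
Lemma conj_conj x : zconj (zconj x) = x. Proof. ezd; apply f_equal2; ring. Qed.

Lemma good_facts th m n : good_pair th m n ->
  Z.gcd m n = 1%Z /\ ~ (3 | m + n)%Z /\ (n <> 0)%Z /\ (0 < nrm (m,n))%Z /\
  (Z.abs (hz m n) <= nrm (m,n))%Z /\ (0 < n * (2*m - n))%Z /\
  cos th * IZR (nrm (m,n)) = IZR (Z.abs (hz m n)) / 2.
Proof.
  intros [Hg [Hn [Hr [H3 Hc]]]].
  assert (HnR : IZR n <> 0) by (apply not_0_IZR; exact Hn).
  apply (ratio_iff m n HnR) in Hr. rewrite <- !mult_IZR in Hr.
  destruct Hr as [r1 r2]. apply le_IZR in r1.
  apply le_IZR in r2.
  assert (Hnn : (0 < n * n)%Z) by nia.
  assert (P : (0 <= (m - n) * (2*n - m))%Z).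
  { assert (0 <= (m*n - n*n) * (2*(n*n) - m*n))%Z by nia.
    assert ((m*n - n*n) * (2*(n*n) - m*n) = (n*n) * ((m - n) * (2*n - m)))%Z by ring. nia. }
  assert (Hq : (0 < nrm (m,n))%Z) by (apply nrm_pos; intro E; inversion E; lia).
  repeat split; try assumption.
  - apply Z.abs_le. unfold hz, nrm; cbn [fst snd]. split; nia.
  - nia.
  - apply cos_iff; assumption.
Qed.

Lemma lat_min_vecs x y : (0 < nrm x)%Z -> nrm x = nrm y -> (Z.abs (dz x y) <= nrm x)%Z ->
  detz x y <> 0%Z ->
  minimal_vec (lat (E x) (E y)) (E x) /\ minimal_vec (lat (E x) (E y)) (E y).
Proof.
  intros HQ Hxy Hd Hdet. apply Z.abs_le in Hd.
  assert (Hx0 : x <> z0) by (intro E; subst; cbn in HQ; lia).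
  assert (Hy0 : y <> z0) by (intro E; subst; cbn in Hxy; lia).
  assert (K : forall z, lat (E x) (E y) z -> z <> (0,0) -> IZR (nrm x) <= norm2 z).
  { intros z Hz Hz0. apply lat_E in Hz. destruct Hz as [i [j ->]].
    rewrite norm2_E. apply IZR_le. apply (int_min x y); try lia.
    destruct (Z.eq_dec i 0); destruct (Z.eq_dec j 0); try lia. subst.
    exfalso; apply Hz0. rewrite <- E_z0. f_equal. }
  split; split; try apply lat_u; try apply lat_v; split; try (apply E_nz; assumption);
  intros z Hz Hz0; rewrite norm2_E; [|rewrite <- Hxy]; apply K; assumption.
Qed.

Lemma gamma_angle th m n : good_pair th m n -> PI/3 <= th <= PI/2 ->
  exists v0', (v0' = ((m-n)%Z, m) \/ v0' = zopp ((m-n)%Z, m)) /\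
   dz (m, (m-n)%Z) v0' = Z.abs (hz m n) /\ nrm v0' = nrm (m,n) /\
   Gamma_th m n = lat (E (m, (m-n)%Z)) (E v0') /\
   detz (m, (m-n)%Z) v0' <> 0%Z /\
   lat_angle (Gamma_th m n) th /\ minimal_vec (Gamma_th m n) (E (m, (m-n)%Z)).
Proof.
  intros Hgood Hth.
  destruct (good_facts th m n Hgood) as [Hg [H3 [Hn [HQ [Hh [Hdet Hc]]]]]].
  assert (Hv : exists v0', (v0' = ((m-n)%Z, m) \/ v0' = zopp ((m-n)%Z, m)) /\
     dz (m, (m-n)%Z) v0' = Z.abs (hz m n) /\ nrm v0' = nrm (m,n) /\
     detz (m, (m-n)%Z) v0' <> 0%Z /\
     lat (E (m, (m-n)%Z)) (E v0') = lat (E (m, (m-n)%Z)) (E ((m-n)%Z, m))).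
  { destruct (Z.le_gt_cases 0 (hz m n)).
    - exists ((m-n)%Z, m). split; [left; reflexivity|]. rewrite dz_uv0, nrm_v0, detz_uv0.
      split; [rewrite Z.abs_eq; lia|]. split; [reflexivity|]. split; [lia|reflexivity].
    - exists (zopp ((m-n)%Z, m)). split; [right; reflexivity|].
      rewrite dz_opp, nrm_opp, detz_opp, dz_uv0, nrm_v0, detz_uv0.
      split; [rewrite Z.abs_neq; lia|]. split; [reflexivity|]. split; [lia|].
      rewrite E_opp. apply lat_neg. }
  destruct Hv as [v0' [Hv1 [Hv2 [Hv3 [Hv4 Hv5]]]]].
  assert (HG : Gamma_th m n = lat (E (m, (m-n)%Z)) (E v0')) by (rewrite Hv5; apply Gamma_eq).
  destruct (lat_min_vecs (m, (m-n)%Z) v0') as [M1 M2].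
  { rewrite nrm_u0; lia. } { rewrite nrm_u0; lia. } { rewrite Hv2, nrm_u0, Z.abs_idemp; lia. }
  { exact Hv4. }
  exists v0'. split; [exact Hv1|]. split; [exact Hv2|]. split; [exact Hv3|].
  split; [exact HG|]. split; [exact Hv4|]. rewrite HG. split; [|exact M1].
  exists (E (m, (m-n)%Z)), (E v0'). split.
  { rewrite det_E. intro E0. pose proof s3pos. apply Hv4. apply eq_IZR. nra. }
  split; [reflexivity|]. split; [exact M1|]. split; [exact M2|]. split; [exact Hth|].
  rewrite !norm2_E, dot_E, Hv3, nrm_u0, Hv2. rewrite sqrt_sqrt by (apply IZR_le; lia). exact Hc.
Qed.

Lemma rot_map b : b <> z0 ->
  orth2 (fst (E b) / sqrt (IZR (nrm b))) (- snd (E b) / sqrt (IZR (nrm b)))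
        (snd (E b) / sqrt (IZR (nrm b))) (fst (E b) / sqrt (IZR (nrm b))) /\
  forall z, Mlin (sqrt (IZR (nrm b))) (fst (E b) / sqrt (IZR (nrm b))) (- snd (E b) / sqrt (IZR (nrm b)))
        (snd (E b) / sqrt (IZR (nrm b))) (fst (E b) / sqrt (IZR (nrm b))) (E z) = E (zmul b z).
Proof.
  intro Hb. pose proof (nrm_pos b Hb) as Hp. apply IZR_lt in Hp.
  pose proof (norm2_E b) as HN. unfold norm2 in HN.
  set (r := sqrt (IZR (nrm b))). assert (Hr : 0 < r) by (apply sqrt_lt_R0; exact Hp).
  assert (Hrr : r * r = IZR (nrm b)) by (apply sqrt_sqrt; lra).
  set (X := fst (E b)) in *. set (Y := snd (E b)) in *.
  split.
  - unfold orth2. repeat split; field_simplify; try lra;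
      rewrite ?Rdiv_1_r; (apply Rmult_eq_reg_r with (r^2); [|nra]);
      field_simplify; try lra; nra.
  - intro z. rewrite E_mul. fold X Y. unfold Mlin. f_equal; field; lra.
Qed.

Lemma refl_map b : b <> z0 ->
  orth2 (fst (E b) / sqrt (IZR (nrm b))) (- snd (E b) / sqrt (IZR (nrm b)))
        (- snd (E b) / sqrt (IZR (nrm b))) (- fst (E b) / sqrt (IZR (nrm b))) /\
  forall z, Mlin (sqrt (IZR (nrm b))) (fst (E b) / sqrt (IZR (nrm b))) (- snd (E b) / sqrt (IZR (nrm b)))
        (- snd (E b) / sqrt (IZR (nrm b))) (- fst (E b) / sqrt (IZR (nrm b))) (E z) = E (zconj (zmul b z)).
Proof.
  intro Hb. pose proof (nrm_pos b Hb) as Hp. apply IZR_lt in Hp.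
  pose proof (norm2_E b) as HN. unfold norm2 in HN.
  set (r := sqrt (IZR (nrm b))). assert (Hr : 0 < r) by (apply sqrt_lt_R0; exact Hp).
  assert (Hrr : r * r = IZR (nrm b)) by (apply sqrt_sqrt; lra).
  set (X := fst (E b)) in *. set (Y := snd (E b)) in *.
  split.
  - unfold orth2. repeat split; field_simplify; try lra;
      rewrite ?Rdiv_1_r; (apply Rmult_eq_reg_r with (r^2); [|nra]);
      field_simplify; try lra; nra.
  - intro z. rewrite E_conj, E_mul. fold X Y. unfold Mlin. cbn [fst snd]. f_equal; field; lra.
Qed.

Lemma sq_eq (a b : Z) : (a * a = b * b)%Z -> a = b \/ a = (- b)%Z.
Proof. intro H. assert ((a - b) * (a + b) = 0)%Z by nia.
  apply Z.mul_eq_0 in H0. lia. Qed.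

Lemma key_real th m n L : good_pair th m n -> C_h_class th L ->
  exists k a b c d, (0 < k)%Z /\ orth2 a b c d /\
    L = lin_image (sqrt (IZR k)) a b c d (Gamma_th m n).
Proof.
  intros Hgood [[_ Hsub] Hang].
  destruct (extract L th Hsub Hang) as [zu [zv [HL [Hdet [Heq [HNp [_ [Hth Hcos]]]]]]]].
  destruct (good_facts th m n Hgood) as [Hg [H3 [Hn [HQ [Hh [Hd0 Hc]]]]]].
  destruct (gamma_angle th m n Hgood Hth) as [v0' [Hv1 [Hv2 [Hv3 [HG [Hv4 _]]]]]].
  set (u0 := (m, (m-n)%Z)) in *. set (NL := nrm zu) in *. set (Q := nrm (m,n)) in *.
  assert (Hu0 : nrm u0 = Q) by apply nrm_u0.
  assert (Hd : (dz zu zv * Q = dz u0 v0' * NL)%Z).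
  { apply eq_IZR. rewrite !mult_IZR, Hv2.
    assert (A : IZR (dz zu zv) = 2 * (cos th * IZR NL)) by lra.
    assert (B : IZR (Z.abs (hz m n)) = 2 * (cos th * IZR Q)) by lra.
    rewrite A, B. ring. }
  pose proof (lagrange zu zv) as L1. pose proof (lagrange u0 v0') as L2.
  rewrite <- Heq in L1. fold NL in L1. rewrite Hu0, Hv3 in L2. fold Q in L2.
  assert (Ht : (detz zu zv * Q = detz u0 v0' * NL \/ detz zu zv * Q = - (detz u0 v0' * NL))%Z).
  { apply sq_eq. set (D := dz zu zv) in *. set (T := detz zu zv) in *.
    set (D0 := dz u0 v0') in *. set (T0 := detz u0 v0') in *.
    assert (3 * (T * Q * (T * Q)) = 3 * (T0 * NL * (T0 * NL)))%Z.
    { transitivity (Q * Q * (4 * NL * NL) - (D * Q) * (D * Q))%Z.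
      - rewrite L1. ring.
      - rewrite Hd. transitivity (NL * NL * (4 * Q * Q) - (D0 * NL) * (D0 * NL))%Z; [ring|].
        rewrite L2. ring. }
    lia. }
  destruct (int_bez m n Hg H3) as [a1 [a2 Hb]].
  assert (Hb' : exists a2', zadd (zmul a1 u0) (zmul a2' v0') = z1).
  { destruct Hv1 as [-> | ->].
    - exists a2. exact Hb.
    - exists (zopp a2). rewrite <- Hb. unfold u0. ring. }
  destruct Hb' as [a2' Hb'].
  assert (HNL : (0 < NL)%Z) by exact HNp.
  destruct Ht as [Ht|Ht].
  - destruct (int_key zu zv u0 v0' NL Q a1 a2') as [b [Ebu Ebv]]; try assumption; try lia.
    assert (Hb0 : b <> z0).
    { intro E0. pose proof HNL as H'. unfold NL in H'. rewrite Ebu, E0 in H'.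
      replace (zmul z0 u0) with z0 in H' by ring. cbn in H'. lia. }
    destruct (rot_map b Hb0) as [Ho HM].
    exists (nrm b). do 4 eexists. split; [apply nrm_pos; exact Hb0|]. split; [exact Ho|].
    rewrite HG, lin_image_lat, !HM, HL, <- Ebu, <- Ebv. reflexivity.
  - destruct (int_key (zconj zu) (zconj zv) u0 v0' NL Q a1 a2') as [b [Ebu Ebv]];
      try assumption; try rewrite nrm_conj; try rewrite dz_conj; try rewrite detz_conj;
      try assumption; try lia.
    assert (Hb0 : b <> z0).
    { intro E0. pose proof HNL as H'. unfold NL in H'. rewrite <- (conj_conj zu) in H'.
      rewrite Ebu, E0 in H'. replace (zmul z0 u0) with z0 in H' by ring. cbn in H'. lia. }
    destruct (refl_map b Hb0) as [Ho HM].
    exists (nrm b). do 4 eexists. split; [apply nrm_pos; exact Hb0|]. split; [exact Ho|].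
    rewrite HG, lin_image_lat, !HM, HL, <- Ebu, <- Ebv, !conj_conj. reflexivity.
Qed.

Lemma lin_min k a b c d G g0 L r : (0 < k)%Z -> orth2 a b c d ->
  L = lin_image (sqrt (IZR k)) a b c d G -> minimal_vec G g0 -> lat_min L r -> norm2 g0 <= r.
Proof.
  intros Hk Ho HL [Gg [g00 Hmg]] [[y [Ly [y0 <-]]] _].
  rewrite HL in Ly. destruct Ly as [q [Gq ->]].
  change (norm2 g0 <= norm2 (Mlin (sqrt (IZR k)) a b c d q)).
  change (Mlin (sqrt (IZR k)) a b c d q <> (0,0)) in y0.
  assert (q <> (0,0)) by (intro E0; subst; apply y0, M0).
  rewrite norm2_M by exact Ho. rewrite sqrt_sqrt by (apply IZR_le; lia).
  pose proof (Hmg q Gq H). pose proof (norm2_nz g0 g00).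
  assert (1 <= IZR k) by (apply IZR_le; lia). nra.
Qed.

Lemma lin_index k a b c d p q L i : (0 < k)%Z -> orth2 a b c d ->
  L = lin_image (sqrt (IZR k)) a b c d (lat p q) -> hex_index L i ->
  Rabs (det2 p q) / (sqrt 3 / 2) <= i.
Proof.
  intros Hk Ho HL [u' [v' [Hd [HL' ->]]]].
  assert (Lu : L u') by (rewrite HL'; apply lat_u).
  assert (Lv : L v') by (rewrite HL'; apply lat_v).
  rewrite HL in Lu, Lv. destruct Lu as [q1 [G1 ->]]. destruct Lv as [q2 [G2 ->]].
  change (det2 (Mlin (sqrt (IZR k)) a b c d q1) (Mlin (sqrt (IZR k)) a b c d q2) <> 0) in Hd.
  change (Rabs (det2 p q) / (sqrt 3 / 2) <=
    Rabs (det2 (Mlin (sqrt (IZR k)) a b c d q1) (Mlin (sqrt (IZR k)) a b c d q2)) / (sqrt 3 / 2)).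
  rewrite det_M in *. rewrite sqrt_sqrt in * by (apply IZR_le; lia).
  destruct (det_lat p q q1 q2 G1 G2) as [K HK]. rewrite HK in *.
  assert (HK0 : K <> 0%Z) by (intro E0; subst; apply Hd; ring).
  pose proof (orth_det a b c d Ho) as Hod.
  assert (Ha : Rabs (a*d - b*c) = 1).
  { destruct (Rle_dec 0 (a*d-b*c)); [rewrite Rabs_pos_eq|rewrite Rabs_left]; nra. }
  assert (HKa : 1 <= Rabs (IZR K)) by (rewrite <- abs_IZR; apply IZR_le; lia).
  assert (Hkr : 1 <= IZR k) by (apply IZR_le; lia).
  rewrite !Rabs_mult, Ha, (Rabs_pos_eq (IZR k)) by lra.
  pose proof s3pos. unfold Rdiv. apply Rmult_le_compat_r.
  - apply Rlt_le, Rinv_0_lt_compat. lra.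
  - pose proof (Rabs_pos (det2 p q)).
    assert (Rabs (det2 p q) <= Rabs (IZR K) * Rabs (det2 p q)) by nra. nra.
Qed.

Lemma gamma_index m n : (0 < n * (2*m - n))%Z ->
  Rabs (det2 (E (m, (m-n)%Z)) (E ((m-n)%Z, m))) / (sqrt 3 / 2) = (2 * IZR m - IZR n) * IZR n.
Proof.
  intro H. rewrite det_E, detz_uv0. pose proof s3pos.
  apply IZR_lt in H. rewrite Rabs_pos_eq by nra. pushI. field. lra.
Qed.

Lemma gamma_sub m n : subset2 (Gamma_th m n) hex.
Proof.
  rewrite Gamma_eq. intros p Hp. apply lat_E in Hp. destruct Hp as [i [j ->]].
  apply hex_E. eexists; reflexivity.
Qed.

Lemma lat_angle_WR L th : lat_angle L th -> WR L.
Proof. intros [u [v [H1 [H2 [H3 [H4 _]]]]]]. exists u, v. auto. Qed.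

Lemma part1_fwd th : C_h th -> exists m n, good_pair th m n.
Proof.
  intros [Hth [G [[_ Hsub] Hang]]].
  destruct (extract G th Hsub Hang) as [zu [zv [HL [Hdet [Heq [HNp [Hmin [_ Hcos]]]]]]]].
  assert (Hc0 : 0 <= cos th) by (apply cos_ge_0; pose proof PI_RGT_0; lra).
  assert (HD0 : (0 <= dz zu zv)%Z).
  { apply le_IZR. apply IZR_lt in HNp. nra. }
  assert (HD1 : (dz zu zv <= nrm zu)%Z).
  { pose proof (Hmin 1%Z (-1)%Z (or_introl (ltac:(discriminate) : (1 <> 0)%Z))) as H.
    assert (E1 : nrm (zadd (zmul (zc 1) zu) (zmul (zc (-1)) zv)) = (nrm zu + nrm zv - dz zu zv)%Z)
      by (ezd; ring).
    rewrite E1 in H. lia. }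
  destruct (int_fwd zu zv (nrm zu) eq_refl (eq_sym Heq) HNp Hdet (conj HD0 HD1))
    as [m [n [Hb [Hn [Hmn [H3 Hr]]]]]].
  exists m, n. unfold good_pair.
  split; [apply Z.bezout_1_gcd; exact Hb|].
  split; [lia|].
  split.
  { apply ratio_iff; [apply not_0_IZR; lia|]. rewrite <- !mult_IZR. split; apply IZR_le; nia. }
  split; [exact H3|].
  apply cos_iff; [lia|].
  assert (Hq : (0 < nrm (m,n))%Z) by (apply nrm_pos; intro E0; inversion E0; lia).
  apply IZR_lt in Hq. apply IZR_lt in HNp.
  apply (Rmult_eq_reg_r (IZR (nrm zu))); [|lra].
  transitivity (IZR (dz zu zv) / 2 * IZR (nrm (m,n))).
  - rewrite <- Hcos. ring.
  - apply (f_equal IZR) in Hr. rewrite !mult_IZR in Hr. field_simplify. rewrite Hr. field.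
Qed.

Lemma part1_bwd th m n : PI / 3 <= th <= PI / 2 -> good_pair th m n -> C_h th.
Proof.
  intros Hth Hgood. split; [exact Hth|]. exists (Gamma_th m n).
  destruct (gamma_angle th m n Hgood Hth) as [_ [_ [_ [_ [_ [_ [Hang _]]]]]]].
  split; [split; [apply (lat_angle_WR _ th Hang)|apply gamma_sub]|exact Hang].
Qed.

Theorem theorem1p1 :
  (forall th : R, PI / 3 <= th <= PI / 2 ->
     (C_h th <-> exists m n : Z, good_pair th m n)) /\
  (forall (th : R) (m n : Z), C_h th -> good_pair th m n ->
     let G := Gamma_th m n in
     subset2 G hex /\
     (forall L, C_h_class th L <-> (WR_hex L /\ similar G L)) /\
     lat_min G (IZR n ^ 2 - IZR m * IZR n + IZR m ^ 2) /\
     (forall L r, C_h_class th L -> lat_min L r ->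
        IZR n ^ 2 - IZR m * IZR n + IZR m ^ 2 <= r) /\
     hex_index G ((2 * IZR m - IZR n) * IZR n) /\
     (forall L i, C_h_class th L -> hex_index L i ->
        (2 * IZR m - IZR n) * IZR n <= i) /\
     (forall L, C_h_class th L <->
        exists (k : Z) (a b c d : R), (0 < k)%Z /\ orth2 a b c d /\
          L = lin_image (sqrt (IZR k)) a b c d G /\ subset2 L hex)).
Proof.
  split.
  - intros th Hth. split; [apply part1_fwd|]. intros [m [n Hg]]. apply (part1_bwd th m n Hth Hg).
  - intros th m n HC Hgood. cbv zeta.
    destruct HC as [Hth _].
    destruct (gamma_angle th m n Hgood Hth) as [v0x [_ [_ [_ [_ [_ [Hang Hmin]]]]]]].
    destruct (good_facts th m n Hgood) as [_ [_ [Hn [HQ [_ [Hd0 _]]]]]].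
    assert (HQr : IZR n ^ 2 - IZR m * IZR n + IZR m ^ 2 = norm2 (E (m, (m-n)%Z))).
    { rewrite norm2_E, nrm_u0. unfold nrm; cbn [fst snd]. pushI. ring. }
    assert (Hcls : forall L, C_h_class th L <->
        exists (k : Z) (a b c d : R), (0 < k)%Z /\ orth2 a b c d /\
          L = lin_image (sqrt (IZR k)) a b c d (Gamma_th m n) /\ subset2 L hex).
    { intro L. split.
      - intro HL. destruct (key_real th m n L Hgood HL) as [k [a [b [c [d [Hk [Ho HE]]]]]]].
        exists k, a, b, c, d. split; [exact Hk|]. split; [exact Ho|]. split; [exact HE|]. apply HL.
      - intros [k [a [b [c [d [Hk [Ho [HE Hs]]]]]]]].
        assert (Hal : sqrt (IZR k) <> 0).
        { apply Rgt_not_eq, sqrt_lt_R0, IZR_lt; exact Hk. }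
        pose proof (sim_transfer _ L th _ _ _ _ _ Hang Hal Ho HE) as HA.
        split; [split; [apply (lat_angle_WR _ th HA)|exact Hs]|exact HA]. }
    split; [apply gamma_sub|].
    split.
    { intro L. split.
      - intro HL. split; [apply HL|].
        destruct (proj1 (Hcls L) HL) as [k [a [b [c [d [Hk [Ho [HE Hs]]]]]]]].
        exists (sqrt (IZR k)), a, b, c, d. split; [|split; assumption].
        apply Rgt_not_eq, sqrt_lt_R0, IZR_lt; exact Hk.
      - intros [HW [al [a [b [c [d [Hal [Ho HE]]]]]]]].
        split; [exact HW|]. apply (sim_transfer _ L th al a b c d Hang Hal Ho HE). }
    split.
    { rewrite HQr. destruct Hmin as [Gu [Gu0 Hm]]. split.
      - exists (E (m, (m-n)%Z)). auto.
      - exact Hm. }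
    split.
    { intros L r HL Hr. rewrite HQr.
      destruct (proj1 (Hcls L) HL) as [k [a [b [c [d [Hk [Ho [HE Hs]]]]]]]].
      apply (lin_min k a b c d (Gamma_th m n) _ L r Hk Ho HE Hmin Hr). }
    split.
    { exists (E (m, (m-n)%Z)), (E ((m-n)%Z, m)). split.
      - rewrite det_E, detz_uv0. pose proof s3pos. apply IZR_lt in Hd0. nra.
      - split; [apply Gamma_eq|]. rewrite gamma_index by exact Hd0. reflexivity. }
    split.
    { intros L i HL Hi.
      destruct (proj1 (Hcls L) HL) as [k [a [b [c [d [Hk [Ho [HE Hs]]]]]]]].
      rewrite Gamma_eq in HE. rewrite <- (gamma_index m n Hd0).
      apply (lin_index k a b c d _ _ L i Hk Ho HE Hi). }
    exact Hcls.
Qed.
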